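(* For every integer $n\ge 3$ with $n\equiv 1$ or $n\equiv 3\pmod 4$, $\gamma_p(C_n\times C_4)=\gamma_t(C_n\times C_4)=n+1$.
   Context: All graphs are finite, simple and undirected. $C_n$ denotes the cycle of order $n$ and $G\times H$ the Cartesian product of graphs. For a graph $G$ without isolated vertices: a set $D\subseteq V(G)$ is a total dominating set if every vertex of $G$ (including those in $D$) has a neighbour in $D$; $\gamma_t(G)$ is the minimum size of a total dominating set. A set $D\subseteq V(G)$ is a paired dominating set if every vertex outside $D$ has a neighbour in $D$ and the induced subgraph $G[D]$ has a perfect matching; $\gamma_p(G)$ is the minimum size of a paired dominating set. *)

(* Defs.v *)
From mathcomp Require Import all_boot.
Set Implicit Arguments. Unset Strict Implicit. Unset Printing Implicit Defensive.

(* A simple graph on a finite vertex type T is given by a symmetric,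
   irreflexive boolean adjacency relation e. *)

(* Cycle C_n on vertices 'I_n (meaningful as a simple graph for n >= 3):
   i ~ j iff j = i+1 mod n or i = j+1 mod n. *)
Definition cycle_adj (n : nat) : rel 'I_n :=
  fun i j => (val j == (val i).+1 %% n) || (val i == (val j).+1 %% n).

Definition cart_adj (T1 T2 : finType) (e1 : rel T1) (e2 : rel T2)
  : rel (T1 * T2) :=
  fun x y => ((x.1 == y.1) && e2 x.2 y.2) || ((x.2 == y.2) && e1 x.1 y.1).

Definition torus_adj (n m : nat) : rel ('I_n * 'I_m) :=
  cart_adj (@cycle_adj n) (@cycle_adj m).

Definition total_dominating (T : finType) (e : rel T) (D : {set T}) : Prop :=
  forall x : T, exists2 y, y \in D & e x y.

Definition dominating (T : finType) (e : rel T) (D : {set T}) : Prop :=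
  forall x : T, x \notin D -> exists2 y, y \in D & e x y.

(* The induced subgraph G[D] has a perfect matching: there is a
   fixed-point-free involution of D pairing each vertex with a neighbour. *)
Definition has_perfect_matching (T : finType) (e : rel T) (D : {set T}) : Prop :=
  exists p : T -> T,
    forall x, x \in D -> [/\ p x \in D, p x != x, e x (p x) & p (p x) = x].

Definition paired_dominating (T : finType) (e : rel T) (D : {set T}) : Prop :=
  dominating e D /\ has_perfect_matching e D.

Definition is_min_size (T : finType) (P : {set T} -> Prop) (k : nat) : Prop :=
  (exists2 D, P D & #|D| = k) /\ (forall D, P D -> k <= #|D|).

Definition total_domination_number_is (T : finType) (e : rel T) (k : nat) : Prop :=
  is_min_size (total_dominating e) k.

Definition paired_domination_number_is (T : finType) (e : rel T) (k : nat) : Prop :=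
  is_min_size (paired_dominating e) k.

(* Main.v *)
Require Import Defs.
From mathcomp Require Import all_boot zify.
Set Implicit Arguments. Unset Strict Implicit. Unset Printing Implicit Defensive.

Lemma inv_even (T : finType) (p : T -> T) (D : {set T}) :
  (forall x, x \in D -> [/\ p x \in D, p x != x & p (p x) = x]) -> ~~ odd #|D|.
Proof.
move: {2}#|D|.+1 (ltnSn #|D|) => m; elim: m D => // m IH D hD hp.
have [->|[x xD]] := set_0Vmem D; first by rewrite cards0.
have [pxD pxx ppx] := hp x xD.
have pxD' : p x \in D :\ x by rewrite !inE pxx.
rewrite (cardsD1 x) xD (cardsD1 (p x) (D :\ x)) pxD' /=.
rewrite add0n negbK.
apply: IH.
  move: hD; rewrite (cardsD1 x) xD (cardsD1 (p x) (D :\ x)) pxD' /=; lia.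
move=> y; rewrite !inE => /and3P [ypx yx yD].
have [pyD pyy ppy] := hp y yD.
split=> //; rewrite pyD andbT; apply/andP; split.
  by apply: contra yx => /eqP e; rewrite -ppy e ppx.
by apply: contra ypx => /eqP e; rewrite -ppy e.
Qed.

Lemma count_bounds (T : finType) (e : rel T) (D : {set T}) k :
  (forall y, #|[set x | e x y]| <= k) -> (forall x, exists2 y, y \in D & e x y) ->
  \sum_x #|[set y in D | e x y]| <= k * #|D| /\
  forall x, 0 < #|[set y in D | e x y]|.
Proof.
move=> hdeg hdom; split; last first.
  by move=> x; apply/card_gt0P; have [y yD exy] := hdom x; exists y; rewrite inE yD.
have E : forall x, #|[set y in D | e x y]| = \sum_(y in D) e x y.
  move=> x; rewrite -sum1_card big_mkcond [RHS]big_mkcond /=; apply: eq_bigr => y _.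
  by rewrite inE; case: (y \in D); case: (e x y).
under eq_bigr do rewrite E.
rewrite exchange_big /= mulnC -sum_nat_const; apply: leq_sum => y _.
apply: leq_trans (hdeg y); rewrite -sum1_card /=.
rewrite [X in _ <= X]big_mkcond; apply: leq_sum => x _; rewrite inE; by case: (e x y).
Qed.

Lemma cycle_adj_nb m (a b : 'I_m) : cycle_adj a b -> a = ordS b \/ a = ord_pred b.
Proof.
rewrite /cycle_adj => /orP [] /eqP h.
  right; have -> : b = ordS a by apply: val_inj.
  by rewrite ordSK.
by left; apply: val_inj.
Qed.

Lemma deg4 n (y : 'I_n * 'I_4) : #|[set x | torus_adj x y]| <= 4.
Proof.
set s := [:: (y.1, ordS y.2); (y.1, ord_pred y.2); (ordS y.1, y.2); (ord_pred y.1, y.2)].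
apply: leq_trans (card_size s); apply: subset_leq_card; apply/subsetP => -[x1 x2].
case: y @s => y1 y2 s; rewrite inE /torus_adj /cart_adj /= => /orP [] /andP [/eqP e h].
  subst x1; have [->|->] := cycle_adj_nb h; by rewrite !inE eqxx ?orbT.
subst x2; have [->|->] := cycle_adj_nb h; by rewrite !inE eqxx ?orbT.
Qed.

Lemma torus_sym n m : symmetric (@torus_adj n m).
Proof.
move=> x y; rewrite /torus_adj /cart_adj /cycle_adj.
by rewrite (eq_sym x.1) (eq_sym x.2) (orbC (_ == (val x.2).+1 %% m)) (orbC (_ == (val x.1).+1 %% n)).
Qed.

Lemma cycle_irr m (a : 'I_m) : 1 < m -> cycle_adj a a = false.
Proof.
move=> hm; rewrite /cycle_adj orbb; apply/negbTE/eqP => h.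
have := ltn_ord a; case: (ltnP (val a).+1 m) => h2 h3.
  by move: h; rewrite modn_small //; lia.
have e : (val a).+1 = m by lia.
by move: h; rewrite e modnn; lia.
Qed.

Lemma torus_irr n (x : 'I_n * 'I_4) : 1 < n -> torus_adj x x = false.
Proof.
move=> hn; rewrite /torus_adj /cart_adj !eqxx !cycle_irr //.
Qed.

Lemma lower n (D : {set 'I_n * 'I_4}) :
  3 <= n -> odd n -> total_dominating (@torus_adj n 4) D -> n < #|D|.
Proof.
move=> hn on hD.
have [hs hpos] := count_bounds (@deg4 n) hD.
set f := fun x => #|[set y in D | torus_adj x y]| in hs hpos.
have hT : #|{: 'I_n * 'I_4}| = \sum_(x : 'I_n * 'I_4) 1 by rewrite sum1_card.
have E : \sum_x f x = \sum_x (f x - 1) + #|{: 'I_n * 'I_4}|.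
  rewrite hT -big_split /=; apply: eq_bigr => x _; rewrite subnK //; exact: hpos.
move: hs; rewrite E card_prod !card_ord => hs.
rewrite ltn_neqAle; apply/andP; split; last first.
  by rewrite -(leq_pmul2l (isT : 0 < 4)) [4 * n]mulnC; apply: leq_trans hs; apply: leq_addl.
apply/eqP => hDn.
have h0 : \sum_x (f x - 1) = 0 by move: hs; rewrite -hDn; lia.
have f1 : forall x, f x = 1.
  move=> x; have := hpos x; move/eqP: h0; rewrite sum_nat_eq0 => /forallP /(_ x) /implyP.
  move=> /(_ isT); rewrite /f subn_eq0 => a b; apply/eqP; by rewrite eqn_leq a b.
pose p x := odflt x [pick z in D | torus_adj x z].
have pP : forall x, x \in D -> p x \in D /\ torus_adj x (p x).
  move=> x0 _; rewrite /p; case: pickP => [z /andP [] //|] h0'.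
  by have [y yD exy] := hD x0; have := h0' y; rewrite yD exy.
have uniq : forall x z, z \in D -> torus_adj x z -> z = p x.
  move=> a z zD exz; have /eqP/cards1P [w hw] := f1 a.
  have xD: p a \in D /\ torus_adj a (p a).
    rewrite /p; case: pickP => [z' /andP [] //|] h0'.
    by have := h0' z; rewrite zD exz.
  have : z \in [set y in D | torus_adj a y] by rewrite inE zD exz.
  have : p a \in [set y in D | torus_adj a y] by rewrite inE xD.1 xD.2.
  by rewrite hw !inE => /eqP -> /eqP ->.
move: on; rewrite hDn; apply/negP; apply: (@inv_even _ p D) => x xD; have [pxD exp] := pP x xD; split => //.
  by apply/eqP => e; move: exp; rewrite e torus_irr //; lia.
by apply/esym/uniq => //; rewrite torus_sym.
Qed.

Definition Dset n : {set 'I_n * 'I_4} :=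
  [set x : 'I_n * 'I_4 | ~~ odd x.1 && ((x.2 < 2) == (x.1 %% 4 == 0))].

Definition o4 (k : nat) (h : k < 4) : 'I_4 := Ordinal h.

Definition partner (r : 'I_4) : 'I_4 :=
  match val r with
  | 0 => @o4 1 isT | 1 => @o4 0 isT | 2 => @o4 3 isT | _ => @o4 2 isT end.

Lemma sum_even_cols m : \sum_(0 <= i < m) (if odd i then 0 else 2) = m + odd m.
Proof.
elim: m => [|m IH]; first by rewrite big_geq.
rewrite big_nat_recr //= IH; case: (odd m) => /=; lia.
Qed.

Lemma card_Dset n : odd n -> #|Dset n| = n.+1.
Proof.
move=> on.
rewrite -sum1_card big_mkcond /=.
have -> : \sum_(x : 'I_n * 'I_4) (if x \in Dset n then 1 else 0)
   = \sum_(i < n) \sum_(j < 4) (if (i, j) \in Dset n then 1 else 0).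
  by rewrite pair_bigA; apply: eq_bigr => -[].
have -> : \sum_(i < n) \sum_(j < 4) (if (i, j) \in Dset n then 1 else 0)
          = \sum_(i < n) (if odd i then 0 else 2).
  apply: eq_bigr => i _; rewrite !big_ord_recl big_ord0 !inE /=.
  by case: (odd i); case: (i %% 4 == 0).
by rewrite -(big_mkord xpredT (fun i => if odd i then 0 else 2)) sum_even_cols on addn1.
Qed.

Lemma Dset_total n : odd n -> total_dominating (@torus_adj n 4) (Dset n).
Proof.
move=> on [i r]; case: (boolP (odd i)) => oi.
  have hi1 : i.+1 < n.
    have := ltn_ord i; rewrite leq_eqVlt => /orP [/eqP e|//].
    by have := congr1 odd e; rewrite /= oi on.
  have hi0 : i.-1 < n by apply: leq_ltn_trans (leq_pred _) (ltn_ord i).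
  have ipos : 0 < val i by rewrite lt0n; apply: contraTneq oi => ->.
  case h: ((r < 2) == (i.+1 %% 4 == 0)).
    exists (Ordinal hi1, r); first by rewrite inE /= oi h.
    by rewrite /torus_adj /cart_adj /cycle_adj /= eqxx (modn_small hi1) eqxx orbT.
  exists (Ordinal hi0, r).
    rewrite inE /=.
    have -> : odd i.-1 = false by move: oi; rewrite -(prednK ipos) /= => /negbTE.
    move: h; have : i %% 2 = 1 by rewrite modn2 oi.
    case: (r < 2) => /= h2; case: eqP => h3; case: eqP => h4 //; lia.
  by rewrite /torus_adj /cart_adj /cycle_adj /= eqxx prednK // (modn_small (ltn_ord i)) eqxx !orbT.
have Hc : forall r' : 'I_4, cycle_adj r r' -> (r' < 2) == (i %% 4 == 0) ->
    exists2 y, y \in Dset n & torus_adj (i, r) y.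
  move=> r' h1 h2; exists (i, r'); first by rewrite inE /= oi h2.
  by rewrite /torus_adj /cart_adj /= eqxx h1.
case: r Hc => [[|[|[|[|k]]]] Hr] Hc //; case: (i %% 4 == 0) Hc => Hc;
  by [apply: (Hc (@o4 0 isT)) | apply: (Hc (@o4 1 isT)) | apply: (Hc (@o4 2 isT)) | apply: (Hc (@o4 3 isT))].
Qed.

Lemma Dset_pm n : has_perfect_matching (@torus_adj n 4) (Dset n).
Proof.
exists (fun x => (x.1, partner x.2)) => -[i r]; rewrite !inE /= => h.
rewrite /torus_adj /cart_adj /= eqxx /=.
case: r h => [[|[|[|[|k]]]] Hr] // h; rewrite /partner /=; split => //;
  try (by rewrite -h); try (by apply/eqP; case);
  by congr pair; apply: val_inj.
Qed.

Lemma paired_total n (D : {set 'I_n * 'I_4}) :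
  paired_dominating (@torus_adj n 4) D -> total_dominating (@torus_adj n 4) D.
Proof.
move=> [hd [p hp]] x; case: (boolP (x \in D)) => xD; last exact: hd.
by have [pxD _ e _] := hp x xD; exists (p x).
Qed.

Theorem lemma4p1 (n : nat) :
  3 <= n -> (n %% 4 = 1 \/ n %% 4 = 3) ->
  paired_domination_number_is (@torus_adj n 4) n.+1 /\
  total_domination_number_is (@torus_adj n 4) n.+1.
Proof.
move=> hn h4.
have on : odd n.
  have : n %% 2 = 1 by case: h4 => h; lia.
  by rewrite modn2; case: (odd n).
have hpd : paired_dominating (@torus_adj n 4) (Dset n).
  split; last exact: Dset_pm.
  by move=> x _; apply: Dset_total.
split; split.
- by exists (Dset n) => //; rewrite card_Dset.
- by move=> D /paired_total; apply: lower.
- by exists (Dset n); [apply: Dset_total | rewrite card_Dset].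
- by move=> D; apply: lower.
Qed.
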